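(* Let $d\ge2$, $k\ge1$, $U=U_1\times\cdots\times U_d$ with pairwise disjoint $U_i$, and $T\subseteq U$. Let $\mathbb F$ be a field of characteristic $2$ with $|\mathbb F|\ge N$. Let $f:\bigcup_{i=2}^dU_i\to\mathbb F$ be injective, and let $\chi(b)=(1,f(b),\dots,f(b)^{(d-1)k-1})\in\mathbb F^{(d-1)k}$. For $t\in T$ let $M_t=\chi(t[2])\wedge\cdots\wedge\chi(t[d])\in\Lambda(\mathbb F^{(d-1)k})$. Let $y_t$ ($t\in T$) and $z$ be indeterminates. For $a\in U_1$ let $Q_a=\sum_{t\in T:t[1]=a}M_ty_t$, and set $$P(z)=\prod_{a\in U_1}(1+zQ_a).$$ Then $P$ has $z$-degree at most $k$. Moreover, the coefficient of $z^ke_{[(d-1)k]}$ in $P(z)$ is a nonzero polynomial in the variables $\{y_t\}$ if and only if $T$ contains $k$ pairwise disjoint tuples.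
   Context: $\Lambda(\mathbb F^{r})$ is the exterior algebra over $\mathbb F^r$ with basis $\{e_I:I\subseteq[r]\}$ and $e_{[r]}=e_1\wedge\cdots\wedge e_r$. Vectors are identified with degree-one elements. Since $\mathbb F$ has characteristic $2$, this algebra is commutative. Coefficients are taken in the polynomial ring $\mathbb F[\{y_t\}]$. Tuples $a,b\in U$ are disjoint if $a[i]\ne b[i]$ for all $i=1,\dots,d$. *)

(* Defs.v *)
From HB Require Import structures.
From mathcomp Require Import all_boot all_order all_algebra.
From mathcomp Require Import mpoly.
Set Implicit Arguments. Unset Strict Implicit. Unset Printing Implicit Defensive.
Import GRing.Theory.
Local Open Scope ring_scope.

(* Exterior algebra Lambda(R^r) over a commutative ring R, with basis e_I,
   I a subset of {0,..,r-1}; an element is its coordinate function. *)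
Section Exterior.
Variables (R : comRingType) (r : nat).

Definition ext := {ffun {set 'I_r} -> R}.

(* e_I /\ e_J = ext_sign I J * e_(I u J) if I, J disjoint, 0 otherwise *)
Definition ext_sign (I J : {set 'I_r}) : R :=
  (-1) ^+ #|[set p : 'I_r * 'I_r | (p.1 \in I) && (p.2 \in J) && (p.2 < p.1)%N]|.

Definition ext_mul (u v : ext) : ext :=
  [ffun K => \sum_(I : {set 'I_r}) \sum_(J : {set 'I_r} | [disjoint I & J] && (I :|: J == K))
      ext_sign I J * u I * v J].

Definition ext_one : ext := [ffun K => (K == set0)%:R].
Definition ext_add (u v : ext) : ext := [ffun K => u K + v K].
Definition ext_scale (c : R) (u : ext) : ext := [ffun K => c * u K].
Definition ext_vec (v : 'I_r -> R) : ext :=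
  [ffun K => \sum_(i : 'I_r | K == [set i]) v i].
(* the top basis element e_[r] corresponds to the coordinate at setT *)
End Exterior.

Section Construction.
Variables (d k : nat) (X : finType) (U : 'I_d -> {set X}) (F : fieldType)
  (T : {set {ffun 'I_d -> X}}) (f : X -> F).

(* one variable y_t for every d-tuple t (only those with t in T occur) *)
Definition nvars := #|{: {ffun 'I_d -> X}}|.
(* coefficient ring: polynomials in z over F[{y_t}] *)
Definition Coef := {poly {mpoly F[nvars]}}.
Definition yvar (t : {ffun 'I_d -> X}) : Coef := ('X_(enum_rank t))%:P.
Definition cst (c : F) : Coef := (c%:MP)%:P.

Definition rk := ((d - 1) * k)%N.

Definition chi (b : X) : 'I_rk -> Coef := fun j => cst (f b ^+ j).

(* M_t = chi(t[2]) /\ ... /\ chi(t[d])  (coordinates indexed from 0) *)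
Definition Mt (t : {ffun 'I_d -> X}) : ext Coef rk :=
  \big[@ext_mul Coef rk / ext_one Coef rk]_(i : 'I_d | (0 < i)%N) ext_vec (chi (t i)).

(* first coordinate of a tuple (index 0) and the set U_1 *)
Definition first_is (t : {ffun 'I_d -> X}) (a : X) : bool :=
  [forall i : 'I_d, (nat_of_ord i == 0)%N ==> (t i == a)].
Definition U1 : {set X} := \bigcup_(i : 'I_d | nat_of_ord i == 0%N) U i.

Definition Qa (a : X) : ext Coef rk :=
  \big[@ext_add Coef rk / [ffun => 0]]_(t in T | first_is t a) ext_scale (yvar t) (Mt t).

(* P(z) = prod_{a in U_1} (1 + z Q_a); z is the polynomial variable 'X *)
Definition Pz : ext Coef rk :=
  \big[@ext_mul Coef rk / ext_one Coef rk]_(a in U1)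
     ext_add (ext_one Coef rk) (ext_scale 'X (Qa a)).

End Construction.

Definition tuples_disjoint (d : nat) (X : finType) (a b : {ffun 'I_d -> X}) :=
  forall i : 'I_d, a i != b i.

(* Main.v *)
Require Import Defs.
From HB Require Import structures.
From mathcomp Require Import all_boot all_order all_algebra all_fingroup.
From mathcomp Require Import mpoly.
From mathcomp Require Import ring.
Set Implicit Arguments. Unset Strict Implicit. Unset Printing Implicit Defensive.
Import GRing.Theory.
Local Open Scope ring_scope.

Section ExtRing.
Variables (R : comNzRingType) (r : nat).

Definition sext := ext R r.
HB.instance Definition _ := GRing.Zmodule.on sext.

Definition cnd (I J K : {set 'I_r}) := (I :&: J == set0) && (I :|: J == K).

Definition smul (u v : sext) : sext :=
  [ffun K => \sum_I \sum_J (cnd I J K)%:R * (u I * v J)].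
Definition sone : sext := [ffun K => (K == set0)%:R].

Lemma smulC : commutative smul.
Proof.
move=> u v; apply/ffunP => K; rewrite !ffunE exchange_big /=.
apply: eq_bigr => I _; apply: eq_bigr => J _.
by rewrite /cnd setIC setUC; congr (_ * _); exact: mulrC.
Qed.

Lemma smul1 : left_id sone smul.
Proof.
move=> u; apply/ffunP => K; rewrite !ffunE (bigD1 set0) //=.
rewrite [\sum_(i | i != set0) _]big1; last first.
  move=> I nI; apply: big1 => J _; rewrite ffunE (negbTE nI) mul0r mulr0 //.
rewrite addr0 (bigD1 K) //= [\sum_(i | i != K) _]big1; last first.
  by move=> J nJ; rewrite /cnd set0U (negbTE nJ) andbF mul0r.
by rewrite /cnd set0U eqxx set0I eqxx ffunE eqxx !mul1r addr0.
Qed.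

Lemma smulDl : left_distributive smul +%R.
Proof.
move=> u v w; apply/ffunP => K; rewrite !ffunE -big_split; apply: eq_bigr => I _.
rewrite -big_split; apply: eq_bigr => J _; by rewrite ffunE !mulrDl mulrDr.
Qed.

Definition c3 (A B C K : {set 'I_r}) :=
  [&& A :&: B == set0, A :&: C == set0, B :&: C == set0 & (A :|: B :|: C == K)].

Definition T3 (u v w : sext) K :=
  \sum_A \sum_B \sum_C (c3 A B C K)%:R * (u A * v B * w C).

Lemma smulT3 u v w K : smul u (smul v w) K = T3 u v w K.
Proof.
rewrite !ffunE /T3; apply: eq_bigr => A _.
transitivity (\sum_J \sum_B \sum_C
   ((cnd A J K)%:R * (cnd B C J)%:R * (u A * v B * w C))).
  apply: eq_bigr => J _; rewrite ffunE !big_distrr; apply: eq_bigr => B _ /=.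
  rewrite !big_distrr; apply: eq_bigr => C _ /=; ring.
rewrite exchange_big /=; apply: eq_bigr => B _.
rewrite exchange_big /=; apply: eq_bigr => C _.
rewrite -big_distrl /=; congr (_ * _).
rewrite (bigD1 (B :|: C)) //= big1 ?addr0; last first.
  by move=> J nJ; rewrite /cnd [B :|: C == J]eq_sym (negbTE nJ) andbF mulr0.
rewrite /cnd /c3 eqxx andbT -natrM.
rewrite setIUr setU_eq0 setUA.
congr (_%:R).
by case: (A :&: B == set0); case: (A :&: C == set0); case: (B :&: C == set0);
  case: (A :|: B :|: C == K).
Qed.

Lemma T3rot u v w K : T3 u v w K = T3 w u v K.
Proof.
rewrite /T3.
under eq_bigr do rewrite exchange_big.
rewrite exchange_big; apply: eq_bigr => C _; apply: eq_bigr => A _; apply: eq_bigr => B _.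
rewrite /c3; congr (_%:R * _); last by ring.
rewrite (setIC C A) (setIC C B).
have -> : C :|: A :|: B = A :|: B :|: C.
  by apply/setP=> x; rewrite !inE; case: (x \in A); case: (x \in B); case: (x \in C).
by case: (A :&: B == set0); case: (A :&: C == set0); case: (B :&: C == set0).
Qed.

Lemma smulA : associative smul.
Proof.
move=> u v w; apply/ffunP => K.
by rewrite smulT3 smulC smulT3 T3rot.
Qed.

Lemma sone_neq0 : sone != 0.
Proof. by apply/eqP => /ffunP /(_ set0); rewrite !ffunE eqxx; apply/eqP; apply: oner_neq0. Qed.

HB.instance Definition _ := GRing.Zmodule_isComNzRing.Build sext smulA smulC smul1 smulDl sone_neq0.

End ExtRing.


Lemma sqr_sum2 (S : comNzRingType) (h : 2%:R = 0 :> S) (I : Type) (s : seq I)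
  (P : pred I) (F : I -> S) :
  (\sum_(i <- s | P i) F i) ^+ 2 = \sum_(i <- s | P i) F i ^+ 2.
Proof.
elim/big_rec2: _ => [|i y1 y2 _ <-]; first by rewrite expr0n.
by rewrite sqrrD -mulr_natr h mulr0 addr0.
Qed.

Section Bridge.
Variables (R : comNzRingType) (r : nat).
Hypothesis h2 : 2%:R = 0 :> R.
Local Notation E := (sext R r).

Lemma m1_1 : -1 = 1 :> R.
Proof. by apply/eqP; rewrite -subr_eq0 -opprD -mulr2n h2 oppr0. Qed.

Lemma ext_sign1 I J : @ext_sign R r I J = 1.
Proof. by rewrite /ext_sign m1_1 expr1n. Qed.

Lemma ext_mulE (u v : ext R r) : ext_mul u v = (u : E) * v.
Proof.
apply/ffunP => K; rewrite !ffunE; apply: eq_bigr => I _.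
rewrite big_mkcond /=; apply: eq_bigr => J _.
rewrite ext_sign1 mul1r /cnd setI_eq0.
by case: ifP => _; rewrite ?mul1r ?mul0r.
Qed.

Lemma ext_oneE : ext_one R r = 1 :> E.
Proof. by []. Qed.

Lemma ext_addE (u v : ext R r) : ext_add u v = (u : E) + v.
Proof. by apply/ffunP => K; rewrite !ffunE. Qed.

Lemma big_extmul (I : Type) (s : seq I) (P : pred I) (F : I -> ext R r) :
  \big[@ext_mul R r/ext_one R r]_(i <- s | P i) F i = \prod_(i <- s | P i) (F i : E).
Proof.
elim/big_rec2: _ => [|i y1 y2 _ ->]; first by [].
by rewrite ext_mulE.
Qed.

Lemma big_extadd (I : Type) (s : seq I) (P : pred I) (F : I -> ext R r) :
  \big[@ext_add R r/[ffun => 0]]_(i <- s | P i) F i = \sum_(i <- s | P i) (F i : E).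
Proof.
apply: (big_rec2 (fun (a : ext R r) (b : E) => a = b)) => [|i y1 y2 _ ->].
  by apply/ffunP => K; rewrite !ffunE.
by rewrite ext_addE.
Qed.

Definition sc (c : R) : E := [ffun K => (K == set0)%:R * c].

Lemma scE c (u : E) K : (sc c * u) K = c * u K.
Proof.
rewrite /GRing.mul /= /smul ffunE (bigD1 set0) //=.
rewrite [\sum_(i | i != set0) _]big1; last first.
  move=> I nI; apply: big1 => J _; rewrite ffunE (negbTE nI) mul0r mul0r mulr0 //.
rewrite addr0 (bigD1 K) //= [\sum_(i | i != K) _]big1; last first.
  by move=> J nJ; rewrite /cnd set0U (negbTE nJ) andbF mul0r.
by rewrite /cnd set0U eqxx set0I eqxx ffunE eqxx !mul1r addr0.
Qed.

Lemma ext_scaleE c (u : ext R r) : ext_scale c u = sc c * (u : E).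
Proof. by apply/ffunP => K; rewrite scE ffunE. Qed.

Lemma sc1 : sc 1 = 1.
Proof. by apply/ffunP => K; rewrite !ffunE mulr1. Qed.

Lemma scM a b : sc (a * b) = sc a * sc b.
Proof. by apply/ffunP => K; rewrite scE !ffunE mulrCA. Qed.

Lemma scD a b : sc (a + b) = sc a + sc b.
Proof. by apply/ffunP => K; rewrite !ffunE mulrDr. Qed.

Definition eS (I : {set 'I_r}) : E := [ffun K => (K == I)%:R].

Lemma eSM I J : eS I * eS J = if I :&: J == set0 then eS (I :|: J) else 0.
Proof.
apply/ffunP => K; rewrite /GRing.mul /= /smul ffunE (bigD1 I) //=.
rewrite [\sum_(i | i != I) _]big1; last first.
  by move=> I' nI; apply: big1 => J' _; rewrite ffunE (negbTE nI) mul0r mulr0.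
rewrite addr0 (bigD1 J) //= [\sum_(i | i != J) _]big1; last first.
  by move=> J' nJ; rewrite [eS J J']ffunE (negbTE nJ) !mulr0.
rewrite !ffunE !eqxx !mulr1 addr0 /cnd.
by case: ifP => _ /=; rewrite ?ffunE ?mul0r // eq_sym.
Qed.

Lemma ext_vecE (v : 'I_r -> R) : ext_vec v = \sum_i sc (v i) * eS [set i] :> E.
Proof.
apply/ffunP => K; rewrite ffunE sum_ffunE big_mkcond; apply: eq_bigr => i _.
by rewrite scE ffunE; case: (K == [set i]); rewrite ?mulr1 ?mulr0.
Qed.

Lemma two0 : 2%:R = 0 :> E.
Proof. apply/ffunP => K; rewrite ffunMnE !ffunE. by rewrite -(mulr_natl _ 2) h2 mul0r. Qed.

Lemma ext_vec_sq (v : 'I_r -> R) : (ext_vec v : E) * ext_vec v = 0.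
Proof.
rewrite -expr2 ext_vecE sqr_sum2 ?two0 //; apply: big1 => i _.
rewrite exprMn [eS _ ^+ 2]expr2 eSM setIid.
case: ifP => [/eqP/setP/(_ i)|]; last by rewrite mulr0.
by rewrite !inE eqxx.
Qed.

End Bridge.


Section Generic.
Variables (R : comNzRingType) (r : nat).
Local Notation E := (sext R r).

Lemma prod_expand (X : finType) (B : {set X}) (G : X -> E) :
  \prod_(a in B) (1 + G a) = \sum_(J : {set X} | J \subset B) \prod_(a in J) G a.
Proof.
pose G' a := if a \in B then G a else 0.
transitivity (\prod_a (G' a + 1)).
  rewrite big_mkcond; apply: eq_bigr => a _; rewrite /G'.
  by case: ifP => _; rewrite ?add0r // addrC.
rewrite (@bigA_distr E 0 1 *%R +%R X G' (fun=> 1)).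
rewrite (bigID (fun J : {set X} => J \subset B)) /= [X in _ + X]big1 ?addr0; last first.
  move=> J /subsetPn[a aJ aB].
  rewrite (bigD1 a) //= aJ /G' (negbTE aB) mul0r //.
apply: eq_bigr => J JB; rewrite -big_mkcond /=; apply: eq_bigr => a aJ.
by rewrite /G' (subsetP JB a aJ).
Qed.

End Generic.

Section ConstSec.
Variables (S : comNzRingType) (r : nat).
Local Notation P := {poly S}.
Local Notation E := (sext P r).

Definition isCst (p : P) := exists c, p = c%:P.
Definition Const (u : E) := forall K, isCst (u K).

Lemma isCst0 : isCst 0. Proof. by exists 0; rewrite polyC0. Qed.
Lemma isCstD p q : isCst p -> isCst q -> isCst (p + q).
Proof. by move=> [a ->] [b ->]; exists (a + b); rewrite polyCD. Qed.
Lemma isCstM p q : isCst p -> isCst q -> isCst (p * q).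
Proof. by move=> [a ->] [b ->]; exists (a * b); rewrite polyCM. Qed.
Lemma isCstn n : isCst n%:R. Proof. by exists n%:R; rewrite polyC_natr. Qed.
Lemma isCst_sum (I : Type) (s : seq I) (Pr : pred I) (F : I -> P) :
  (forall i, Pr i -> isCst (F i)) -> isCst (\sum_(i <- s | Pr i) F i).
Proof. by move=> H; apply: big_ind => //; [exact: isCst0 | exact: isCstD]. Qed.

Lemma Const1 : Const 1.
Proof. by move=> K; rewrite ffunE; apply: isCstn. Qed.

Lemma ConstM u v : Const u -> Const v -> Const (u * v).
Proof.
move=> Hu Hv K; rewrite /GRing.mul /= /smul ffunE.
apply: isCst_sum => I _; apply: isCst_sum => J _.
by apply: isCstM; [apply: isCstn | apply: isCstM].
Qed.

Lemma ConstD u v : Const u -> Const v -> Const (u + v).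
Proof. by move=> Hu Hv K; rewrite ffunE; apply: isCstD. Qed.

Lemma Const0 : Const 0.
Proof. by move=> K; rewrite ffunE; apply: isCst0. Qed.

Lemma Const_prod (I : Type) (s : seq I) (Pr : pred I) (F : I -> E) :
  (forall i, Pr i -> Const (F i)) -> Const (\prod_(i <- s | Pr i) F i).
Proof. by move=> H; apply: big_ind => //; [exact: Const1 | exact: ConstM]. Qed.

Lemma Const_sum (I : Type) (s : seq I) (Pr : pred I) (F : I -> E) :
  (forall i, Pr i -> Const (F i)) -> Const (\sum_(i <- s | Pr i) F i).
Proof. by move=> H; apply: big_ind => //; [exact: Const0 | exact: ConstD]. Qed.

Lemma Const_sc c : Const (sc r c%:P).
Proof. by move=> K; rewrite ffunE; apply: isCstM; [apply: isCstn | exists c]. Qed.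

Lemma Const_vec (v : 'I_r -> S) : Const (ext_vec (fun i => (v i)%:P)).
Proof. by move=> K; rewrite ffunE; apply: isCst_sum => i _; exists (v i). Qed.

Lemma scX (c : P) n : sc r (c ^+ n) = sc r c ^+ n.
Proof. by elim: n => [|n IH]; rewrite ?expr0 ?sc1 // !exprS scM IH. Qed.

Lemma coef_expand (X : finType) (B : {set X}) (Q : X -> E) :
  (forall a, Const (Q a)) -> forall K j,
  ((\prod_(a in B) (1 + sc r 'X * Q a)) K)`_j =
  \sum_(A : {set X} | (A \subset B) && (#|A| == j)) ((\prod_(a in A) Q a) K)`_0.
Proof.
move=> HC K j; rewrite prod_expand sum_ffunE coef_sum big_mkcondr /=.
apply: eq_bigr => A _.
rewrite big_split /= prodr_const -scX scE coefXnM.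
have [c ->] : isCst ((\prod_(a in A) Q a) K) by apply: Const_prod => a _; apply: HC.
rewrite !coefC eqxx subn_eq0.
case: ltnP => [lt|le]; first by rewrite ifN // neq_ltn lt orbT.
case: (eqVneq #|A| j) => [->|ne]; first by rewrite leqnn.
by rewrite ifF //; apply/negbTE; rewrite -ltnNge ltn_neqAle ne le.
Qed.

End ConstSec.


Section Hom.
Variables (R : comNzRingType) (r : nat).
Local Notation E := (sext R r).

Definition Hom (u : E) m := forall K, u K != 0 -> #|K| = m.

Lemma Hom1 : Hom 1 0.
Proof.
move=> K; rewrite ffunE; have [->|nK] := eqVneq K set0; first by rewrite cards0.
by rewrite eqxx.
Qed.

Lemma HomM u v m n : Hom u m -> Hom v n -> Hom (u * v) (m + n).
Proof.
move=> Hu Hv K; apply: contraNeq => ne.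
rewrite /GRing.mul /= /smul ffunE; apply/eqP; apply: big1 => I _; apply: big1 => J _.
rewrite /cnd; case: (eqVneq (I :&: J) set0) => [IJ|]; last by rewrite mul0r.
case: (eqVneq (I :|: J) K) => [IJK|]; last by rewrite andbF mul0r.
case: (eqVneq (u I) 0) => [->|uI]; first by rewrite mul0r mulr0.
case: (eqVneq (v J) 0) => [->|vJ]; first by rewrite mulr0 mulr0.
by case/eqP: ne; rewrite -IJK cardsU IJ cards0 subn0 (Hu _ uI) (Hv _ vJ).
Qed.

Lemma Hom0 m : Hom 0 m.
Proof. by move=> K; rewrite ffunE eqxx. Qed.

Lemma HomD u v m : Hom u m -> Hom v m -> Hom (u + v) m.
Proof.
move=> Hu Hv K; rewrite ffunE.
case: (eqVneq (u K) 0) => [->|/Hu //]; rewrite add0r; exact: Hv.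
Qed.

Lemma Hom_sum (I : Type) (s : seq I) (P : pred I) (F : I -> E) m :
  (forall i, P i -> Hom (F i) m) -> Hom (\sum_(i <- s | P i) F i) m.
Proof. move=> H; apply: (big_ind (fun u => Hom u m)) => //; [exact: Hom0 | move=> x y; exact: HomD]. Qed.

Lemma Hom_sc c u m : Hom u m -> Hom (sc r c * u) m.
Proof.
move=> Hu K; rewrite scE; case: (eqVneq (u K) 0) => [->|/Hu //].
by rewrite mulr0 eqxx.
Qed.

Lemma Hom_vec (v : 'I_r -> R) : Hom (ext_vec v) 1.
Proof.
move=> K; rewrite ffunE; apply: contraNeq => ne; apply/eqP.
apply: big1 => i /eqP Ki; by case/eqP: ne; rewrite Ki cards1.
Qed.

Lemma Hom_prod (I : Type) (s : seq I) (P : pred I) (F : I -> E) m :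
  (forall i, P i -> Hom (F i) m) -> Hom (\prod_(i <- s | P i) F i) (m * count P s).
Proof.
move=> H; elim: s => [|x s IH]; first by rewrite big_nil muln0; exact: Hom1.
rewrite big_cons /=; case: ifP => Px.
  by rewrite add1n mulnS; apply: HomM => //; apply: H.
by rewrite add0n.
Qed.

End Hom.

Section MapE.
Variables (R1 R2 : comNzRingType) (r : nat) (phi : R1 -> R2).
Hypotheses (phi0 : phi 0 = 0) (phi1 : phi 1 = 1)
  (phiD : forall a b, phi (a + b) = phi a + phi b)
  (phiM : forall a b, phi (a * b) = phi a * phi b).

Definition mapE (u : sext R1 r) : sext R2 r := [ffun K => phi (u K)].

Lemma phi_sum (I : Type) (s : seq I) (P : pred I) (F : I -> R1) :
  phi (\sum_(i <- s | P i) F i) = \sum_(i <- s | P i) phi (F i).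
Proof. exact: (big_morph phi phiD phi0). Qed.

Lemma phi_nat (b : bool) : phi b%:R = b%:R.
Proof. by case: b. Qed.

Lemma mapE1 : mapE 1 = 1.
Proof. by apply/ffunP => K; rewrite !ffunE phi_nat. Qed.

Lemma mapEM u v : mapE (u * v) = mapE u * mapE v.
Proof.
apply/ffunP => K; rewrite /GRing.mul /= /smul !ffunE phi_sum; apply: eq_bigr => I _.
rewrite phi_sum; apply: eq_bigr => J _.
by rewrite !phiM phi_nat !ffunE.
Qed.

Lemma mapED u v : mapE (u + v) = mapE u + mapE v.
Proof. by apply/ffunP => K; rewrite !ffunE phiD. Qed.

Lemma mapE0 : mapE 0 = 0.
Proof. by apply/ffunP => K; rewrite !ffunE phi0. Qed.

Lemma mapE_prod (I : Type) (s : seq I) (P : pred I) (F : I -> sext R1 r) :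
  mapE (\prod_(i <- s | P i) F i) = \prod_(i <- s | P i) mapE (F i).
Proof. exact: (big_morph mapE mapEM mapE1). Qed.

Lemma mapE_sum (I : Type) (s : seq I) (P : pred I) (F : I -> sext R1 r) :
  mapE (\sum_(i <- s | P i) F i) = \sum_(i <- s | P i) mapE (F i).
Proof. exact: (big_morph mapE mapED mapE0). Qed.

Lemma mapE_sc c : mapE (sc r c) = sc r (phi c).
Proof. by apply/ffunP => K; rewrite !ffunE phiM phi_nat. Qed.

Lemma mapE_vec (v : 'I_r -> R1) : mapE (ext_vec v) = ext_vec (fun i => phi (v i)).
Proof. by apply/ffunP => K; rewrite !ffunE phi_sum. Qed.

End MapE.


Section Det.
Variables (R : comNzRingType).
Hypothesis h2 : 2%:R = 0 :> R.

Lemma eS_prod r (I : Type) (s : seq I) (g : I -> 'I_r) :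
  \prod_(j <- s) eS R [set g j] =
  if uniq (map g s) then eS R [set x in map g s] else 0.
Proof.
elim: s => [|x s IH].
  by rewrite big_nil /=; apply/ffunP => K; rewrite !ffunE; congr (_ == _)%:R; apply/setP => y; rewrite !inE.
rewrite big_cons IH /=; case: ifP => U; last by rewrite andbF mulr0.
rewrite andbT eSM setI_eq0 disjoints1 inE.
case: ifP => _ //; congr eS; apply/setP => y; by rewrite !inE.
Qed.

Lemma vec_det n (w : 'I_n -> 'I_n -> R) :
  (\prod_(j < n) (ext_vec (w j) : sext R n)) setT = \det (\matrix_(j, i) w j i).
Proof.
rewrite (eq_bigr _ (fun j _ => ext_vecE (w j))).
rewrite bigA_distr_bigA sum_ffunE.
transitivity (\sum_(g : {ffun 'I_n -> 'I_n}) (injectiveb g)%:R * \prod_j w j (g j)).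
  apply: eq_bigr => g _; rewrite big_split /=.
  rewrite -(big_morph (sc n) (@scM R n) (sc1 R n)) scE mulrC; congr (_ * _).
  rewrite eS_prod [index_enum _]unlock -enumT.
  rewrite /injectiveb /dinjectiveb; case: ifP => inj; last by rewrite ffunE.
  rewrite ffunE; suff -> : [set x in [seq g i | i <- enum 'I_n]] = [set: 'I_n] by rewrite eqxx.
  apply/setP => y; rewrite !inE -codomE.
  have ig : injective g by apply/injectiveP.
  exact: (inj_card_onto ig (leqnn _)).
rewrite (bigID (fun f : {ffun 'I_n -> 'I_n} => injectiveb f)) /= addrC big1 ?add0r;
  last by move=> g /negbTE ->; rewrite mul0r.
rewrite (reindex (@pval _)) /=; last first.
  pose in_Sn := insubd (1%g : 'S_n).
  by exists in_Sn => /= f Uf; first apply: val_inj; apply: insubdK.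
apply: eq_big => /= [s | s _]; rewrite ?(valP s) // mul1r.
have m1 : -1 = 1 :> R by exact: (m1_1 h2).
rewrite m1 expr1n mul1r; apply: eq_bigr => i _; by rewrite mxE pvalE.
Qed.

Lemma vec_det_cast n r (e : n = r) (w : 'I_n -> 'I_r -> R) :
  (\prod_(j < n) (ext_vec (w j) : sext R r)) setT =
  \det (\matrix_(j, i) w j (cast_ord e i)).
Proof.
case: r / e w => w; rewrite vec_det; congr (\det _); apply/matrixP => i j.
by rewrite !mxE cast_ord_id.
Qed.

End Det.


Section Main.
Variables (d k : nat) (X : finType) (U : 'I_d -> {set X})
  (F : fieldType) (T : {set {ffun 'I_d -> X}}) (f : X -> F).
Hypothesis d2 : (2 <= d)%N.
Hypothesis h2F : 2%:R = 0 :> F.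

Local Notation C := (Coef d X F).
Local Notation r := (rk d k).
Local Notation E := (sext C r).

Lemma h2C : 2%:R = 0 :> C.
Proof. by rewrite /Coef -polyC_natr -mpolyC_nat h2F mpolyC0 polyC0. Qed.

Lemma MtE t : Mt k f t = \prod_(i : 'I_d | (0 < i)%N) (ext_vec (@chi d k X F f (t i)) : E).
Proof. by rewrite /Mt big_extmul // h2C. Qed.

Lemma QaE a : Qa k T f a = \sum_(t in T | first_is t a) sc r (yvar F t) * Mt k f t :> E.
Proof.
rewrite /Qa big_extadd; apply: eq_bigr => t _; by rewrite ext_scaleE.
Qed.

Lemma PzE : Pz k U T f = \prod_(a in U1 U) (1 + sc r 'X * Qa k T f a) :> E.
Proof.
rewrite /Pz big_extmul ?h2C //; apply: eq_bigr => a _.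
by rewrite ext_addE ext_scaleE.
Qed.

Lemma Const_Mt t : Const (Mt k f t : E).
Proof.
rewrite MtE; apply: Const_prod => i _.
exact: (Const_vec (fun j : 'I_r => (f (t i) ^+ j)%:MP)).
Qed.

Lemma Const_Qa a : Const (Qa k T f a : E).
Proof.
rewrite QaE; apply: Const_sum => t _; apply: ConstM; last exact: Const_Mt.
exact: Const_sc.
Qed.

Lemma count_pos : count (fun i : 'I_d => (0 < i)%N) (index_enum 'I_d) = d.-1.
Proof.
rewrite [index_enum _]unlock -enumT.
rewrite -(count_map (@nat_of_ord d) (fun n => (0 < n)%N)) val_enum_ord.
case: d => [|n] //=; rewrite add0n.
transitivity (size (iota 1 n)); last exact: size_iota.
apply/eqP; rewrite -all_count; apply/allP => x; rewrite mem_iota; by case/andP.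
Qed.

Lemma Hom_Mt t : Hom (Mt k f t : E) d.-1.
Proof.
rewrite MtE -[d.-1]mul1n -count_pos; apply: Hom_prod => i _; exact: Hom_vec.
Qed.

Lemma Hom_Qa a : Hom (Qa k T f a : E) d.-1.
Proof. rewrite QaE; apply: Hom_sum => t _; apply: Hom_sc; exact: Hom_Mt. Qed.

Lemma count_card (Y : finType) (A : {set Y}) : count (mem A) (index_enum Y) = #|A|.
Proof. by rewrite cardE /enum_mem -size_filter [index_enum _]unlock. Qed.

Lemma claim1 K : (size (Pz k U T f K) <= k.+1)%N.
Proof.
apply/leq_sizeP => j hj; rewrite PzE coef_expand; last exact: Const_Qa.
apply: big1 => A /andP[_ /eqP cA].
case: (eqVneq ((\prod_(a in A) (Qa k T f a : E)) K) 0) => [->|nz]; first by rewrite coef0.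
have H : Hom (\prod_(a in A) (Qa k T f a : E)) (d.-1 * #|A|).
  rewrite -count_card; apply: Hom_prod => a _; exact: Hom_Qa.
have := H K nz; rewrite cA => eK.
have hle : (#|K| <= r)%N by rewrite -[X in (_ <= X)%N]card_ord max_card.
exfalso; move: hle; rewrite eK /rk subn1 leq_pmul2l; last by rewrite -subn1 subn_gt0.
by rewrite leqNgt hj.
Qed.


Lemma sum_neq0_ex (I : finType) (V : nmodType) (P : pred I) (G : I -> V) :
  \sum_(i | P i) G i != 0 -> exists2 i, P i & G i != 0.
Proof.
move=> nz; case: (pickP (fun i => P i && (G i != 0))) => [i /andP[Pi Gi]|H].
  by exists i.
case/eqP: nz; apply: big1 => i Pi; move: (H i); rewrite Pi /=.
by move/negbFE/eqP.
Qed.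

Hypothesis hk : (1 <= k)%N.

Definition i0 : 'I_d := Ordinal (leq_trans (isT : (0 < 2)%N) d2).

Lemma first_isE (t : {ffun 'I_d -> X}) (a : X) : first_is t a = (t i0 == a).
Proof.
apply/forallP/eqP => [H | <- i]; first by apply/eqP; move/implyP: (H i0); apply.
apply/implyP => /eqP i0'; have -> : i = i0 by apply: val_inj.
exact: eqxx.
Qed.

Lemma vec_sqC (v : 'I_r -> C) : (ext_vec v : E) * ext_vec v = 0.
Proof. exact: (ext_vec_sq h2C). Qed.

Lemma claim2a : (Pz k U T f setT)`_k != 0 ->
    exists S : {set {ffun 'I_d -> X}},
      [/\ S \subset T, #|S| = k &
          {in S &, forall a b, a != b -> tuples_disjoint a b}].
Proof.
rewrite PzE coef_expand; last exact: Const_Qa.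
case/sum_neq0_ex => A /andP[AU /eqP cA] nz0.
have nz : \prod_(a in A) (Qa k T f a : E) != 0.
  by apply: contraNneq nz0 => ->; rewrite ffunE coef0.
have [a0 a0A] : exists a0, a0 \in A.
  by apply/set0Pn; rewrite -card_gt0 cA.
move: nz; rewrite (eq_bigr _ (fun a _ => QaE a)).
rewrite (big_distr_big_dep [ffun=> a0]) /=.
case/sum_neq0_ex => phi /pfamilyP[_ Hphi] nzp.
have phiT a : a \in A -> phi a \in T.
  by move=> aA; have /andP[] := Hphi a aA.
have phi0 a : a \in A -> phi a i0 = a.
  by move=> aA; have /andP[_] := Hphi a aA; rewrite first_isE => /eqP.
exists (phi @: A); split.
- by apply/subsetP => t /imsetP[a aA ->]; apply: phiT.
- rewrite card_in_imset // => a a' aA a'A e.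
  by rewrite -(phi0 a aA) -(phi0 a' a'A) e.
move=> s s' /imsetP[a aA ->] /imsetP[a' a'A ->] ne i.
have naa : a != a' by apply: contraNneq ne => ->.
apply/negP => /eqP eq.
have ni : i != i0.
  by apply: contraNneq naa => ei; rewrite -(phi0 a aA) -(phi0 a' a'A) -ei eq.
have pi : (0 < i)%N by rewrite lt0n; apply: contra ni => /eqP i00; apply/eqP/val_inj.
move/eqP: nzp; apply.
rewrite (bigD1 a) //= (bigD1 a') /=; last by rewrite a'A eq_sym naa.
rewrite !MtE (bigD1 i) //=.
rewrite [X in _ * ((_ * X) * _)](bigD1 i) //= -eq.
set V := ext_vec _.
have -> : forall x1 x2 x3 x4 x5 x6 : E,
    x1 * (x2 * x3) * (x4 * (x2 * x5) * x6) = (x2 * x2) * (x1 * x3 * x4 * x5 * x6).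
  by move=> *; ring.
by rewrite vec_sqC mul0r.
Qed.


Hypothesis HU : forall i j : 'I_d, i != j -> [disjoint U i & U j].
Hypothesis HT : forall t, t \in T -> forall i, t i \in U i.
Hypothesis Hf : {in \bigcup_(i : 'I_d | (0 < i)%N) U i &, injective f}.

Local Notation E' := (sext F r).

Definition Nt (t : {ffun 'I_d -> X}) : E' :=
  \prod_(i : 'I_d | (0 < i)%N) (ext_vec (fun j : 'I_r => f (t i) ^+ j) : E').

Lemma sc0 (R0 : comNzRingType) n : sc n (0 : R0) = 0.
Proof. by apply/ffunP => K; rewrite !ffunE mulr0. Qed.

Section Back.
Variable S : {set {ffun 'I_d -> X}}.
Hypotheses (ST : S \subset T) (cS : #|S| = k)
  (dS : {in S &, forall a b, a != b -> tuples_disjoint a b}).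

Let e (i : 'I_(nvars d X)) : F := (enum_val i \in S)%:R.
Let phi (p : C) : F := meval e (p`_0).

Let phi0 : phi 0 = 0. Proof. by rewrite /phi coef0 meval0. Qed.
Let phi1 : phi 1 = 1. Proof. by rewrite /phi coef1 /= meval1. Qed.
Let phiD a b : phi (a + b) = phi a + phi b.
Proof. by rewrite /phi coefD mevalD. Qed.
Let phiM a b : phi (a * b) = phi a * phi b.
Proof. by rewrite /phi coef0M mevalM. Qed.
Let phiy t : phi (yvar F t) = (t \in S)%:R.
Proof. by rewrite /phi /yvar coefC /= mevalXU /e enum_rankK. Qed.
Let phic (c : F) : phi (cst d X c) = c.
Proof. by rewrite /phi /cst coefC /= mevalC. Qed.

Lemma mQ a : mapE phi (Qa k T f a : E) = \sum_(t in S | t i0 == a) Nt t.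
Proof.
rewrite QaE (mapE_sum phi0 phiD) big_mkcond [RHS]big_mkcond; apply: eq_bigr => t _.
rewrite first_isE.
case tS: (t \in S).
  have tT : t \in T by apply: (subsetP ST).
  rewrite tT /=; case: (t i0 == a) => //.
  rewrite (mapEM phi0 phi1 phiD phiM) (mapE_sc _ phi0 phi1 phiM) phiy tS sc1 mul1r.
  rewrite MtE (mapE_prod phi0 phi1 phiD phiM); apply: eq_bigr => i _.
  by rewrite (mapE_vec phi0 phiD); apply/ffunP => K; rewrite !ffunE; apply: eq_bigr => j _; rewrite phic.
by case: ifP => // _; rewrite (mapEM phi0 phi1 phiD phiM) (mapE_sc _ phi0 phi1 phiM) phiy tS sc0 mul0r.
Qed.


Lemma fst_inj : {in S &, injective (fun t : {ffun 'I_d -> X} => t i0)}.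
Proof.
move=> t t' tS t'S /= e0; apply/eqP; apply: contraT => ne.
by have := dS tS t'S ne i0; rewrite e0 eqxx.
Qed.

Let AS := [set (t : {ffun 'I_d -> X}) i0 | t in S].

Lemma cAS : #|AS| = k.
Proof. by rewrite card_in_imset //; exact: fst_inj. Qed.

Lemma in_U1 x : x \in U i0 -> x \in U1 U.
Proof. by move=> xU; apply/bigcupP; exists i0. Qed.

Lemma ASU : AS \subset U1 U.
Proof.
apply/subsetP => a /imsetP[t tS ->]; apply: in_U1; apply: HT.
exact: (subsetP ST).
Qed.

Lemma Q0 a : a \notin AS -> \sum_(t in S | t i0 == a) Nt t = 0.
Proof.
move=> aS; apply: big1 => t /andP[tS /eqP ta].
by case/imsetP: aS; exists t.
Qed.

Lemma Q1 t : t \in S -> \sum_(t' in S | t' i0 == t i0) Nt t' = Nt t.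
Proof.
move=> tS; rewrite (big_pred1 t) // => t'; apply/andP/eqP => [[t'S /eqP e0]|->].
  exact: fst_inj.
by rewrite tS eqxx.
Qed.

Lemma sumA : \sum_(A : {set X} | (A \subset U1 U) && (#|A| == k))
     (\prod_(a in A) \sum_(t in S | t i0 == a) Nt t) setT = (\prod_(t in S) Nt t) setT.
Proof.
rewrite (bigD1 AS) /=; last by rewrite ASU cAS eqxx.
rewrite addrC big1 ?add0r; last first.
  move=> A /andP[/andP[AU /eqP cA] nA].
  have [a aA naS] : exists2 a, a \in A & a \notin AS.
    apply/subsetPn; apply: contra nA => sub.
    by rewrite eqEcard sub cA cAS leqnn.
  by rewrite (bigD1 a) //= Q0 // mul0r ffunE.
rewrite big_imset /=; last exact: fst_inj.
by rewrite (eq_bigr _ (fun t tS => Q1 tS)).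
Qed.

Lemma prodN_nz : (\prod_(t in S) Nt t) setT != 0.
Proof.
rewrite /Nt pair_big_dep /=.
pose Pset := [set p : {ffun 'I_d -> X} * 'I_d | (p.1 \in S) && (0 < p.2)%N].
rewrite (eq_bigl (fun p => p \in Pset)); last by move=> p; rewrite inE.
rewrite big_enum_val.
have cP : #|Pset| = r.
  have -> : Pset = setX S [set i : 'I_d | (0 < i)%N] by apply/setP => p; rewrite !inE.
  rewrite cardsX cS -count_card.
  have -> : count (mem [set i : 'I_d | (0 < i)%N]) (index_enum 'I_d) =
     count (fun i : 'I_d => (0 < i)%N) (index_enum 'I_d).
    by apply: eq_count => i /=; rewrite !inE.
  by rewrite count_pos /rk subn1 mulnC.
pose b (j : 'I_#|Pset|) := (enum_val j).1 (enum_val j).2.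
rewrite (vec_det_cast h2F cP (fun j i => f (b j) ^+ i)).
have -> : \matrix_(j, i) f (b j) ^+ (cast_ord cP i) =
   (Vandermonde #|Pset| (\row_j f (b j)))^T by apply/matrixP => j i; rewrite !mxE.
rewrite det_tr det_Vandermonde.
rewrite prodf_seq_neq0; apply/allP => i _; apply/implyP => _.
rewrite prodf_seq_neq0; apply/allP => j _; apply/implyP => ij.
rewrite !mxE subr_eq0.
have nij : enum_val i != enum_val j.
  by apply: contraTneq ij => /enum_val_inj ->; rewrite ltnn.
have bU j' : b j' \in \bigcup_(i' : 'I_d | (0 < i')%N) U i'.
  have := enum_valP j'; rewrite inE => /andP[p1S p2].
  apply/bigcupP; exists (enum_val j').2 => //; apply: HT.
  exact: (subsetP ST).
apply/negP => /eqP /(Hf (bU j) (bU i)); rewrite /b.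
have := enum_valP i; have := enum_valP j; move: nij.
case: (enum_val i) => s x; case: (enum_val j) => s' y /=.
rewrite !inE /= => nij /andP[s'S _] /andP[sS _].
case: (eqVneq x y) => [exy|nxy].
  subst y; have nss : s != s' by apply: contraNneq nij => ->.
  by move=> e0; have := dS sS s'S nss x; rewrite e0 eqxx.
move=> e0.
have sT : s \in T by apply: (subsetP ST).
have s'T : s' \in T by apply: (subsetP ST).
have := disjointFr (HU nxy) (HT sT x); rewrite -e0 (HT s'T y) //.
Qed.

Lemma claim2b : (Pz k U T f setT)`_k != 0.
Proof.
rewrite PzE coef_expand; last exact: Const_Qa.
apply/eqP => H0; have := congr1 (meval e) H0; rewrite meval0 raddf_sum.
have -> : \sum_(A : {set X} | (A \subset U1 U) && (#|A| == k))
    meval e (((\prod_(a in A) (Qa k T f a : E)) setT)`_0) =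
  \sum_(A : {set X} | (A \subset U1 U) && (#|A| == k))
     (\prod_(a in A) \sum_(t in S | t i0 == a) Nt t) setT.
  apply: eq_bigr => A _.
  have -> : meval e (((\prod_(a in A) (Qa k T f a : E)) setT)`_0) =
     (mapE phi (\prod_(a in A) (Qa k T f a : E))) setT by rewrite ffunE.
  by rewrite (mapE_prod phi0 phi1 phiD phiM) (eq_bigr _ (fun a _ => mQ a)).
by rewrite sumA; apply/eqP; exact: prodN_nz.
Qed.

End Back.

End Main.


Unset Implicit Arguments.

Theorem mainTheorem18 (d k : nat) (X : finType) (U : 'I_d -> {set X})
  (F : fieldType) (T : {set {ffun 'I_d -> X}}) (f : X -> F) :
  (2 <= d)%N -> (1 <= k)%N ->
  (forall i j : 'I_d, i != j -> [disjoint U i & U j]) ->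
  (forall t, t \in T -> forall i, t i \in U i) ->
  (2%N \in [pchar F]) ->
  {in \bigcup_(i : 'I_d | (0 < i)%N) U i &, injective f} ->
  (forall K, (size (Pz k U T f K) <= k.+1)%N) /\
  ((Pz k U T f setT)`_k != 0 <->
    exists S : {set {ffun 'I_d -> X}},
      [/\ S \subset T, #|S| = k &
          {in S &, forall a b, a != b -> tuples_disjoint a b}]).
Proof.
move=> d2 hk HU HT hch Hf.
have h2F : 2%:R = 0 :> F := pcharf0 hch.
split; first by move=> K; exact: (claim1 U T f d2 h2F K).
split; first exact: (claim2a d2 h2F hk).
by case=> S [ST cS dS]; exact: (claim2b d2 h2F HU HT Hf ST cS dS).
Qed.
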